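(* Let $V=\{(x_1,x_2,y_1,y_2)\in\mathbb{R}^4: X\neq0,\ Y\neq 0\}$. For every choice of polynomials $P_1,\dots,P_4\in\mathbb{Q}[x_1,x_2,y_1,y_2]$ and every variable $\xi\in\{x_1,x_2,y_1,y_2\}$ there exist polynomials $Q_1,\dots,Q_4\in\mathbb{Q}[x_1,x_2,y_1,y_2]$ such that $\frac{\partial}{\partial\xi}H_{Q_1,\dots,Q_4}=H_{P_1,\dots,P_4}$ on $V$.
   Context: For $(x_1,x_2,y_1,y_2)\in\mathbb{R}^4$ set $X=x_1-y_1$ and $Y=x_2-y_2$. For polynomials $P_1,\dots,P_4$ define on $V$ $$H_{P_1,\dots,P_4}=P_1\ln(X^2+Y^2)+P_2\arctan\!\Big(\frac XY\Big)+P_3\arctan\!\Big(\frac YX\Big)+P_4.$$ *)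

(* Defs.v *)
From mathcomp Require Import all_boot all_order all_algebra.
From mathcomp Require Import mpoly.
From mathcomp Require Import Rstruct.
From Stdlib Require Import Reals.

Set Implicit Arguments. Unset Strict Implicit. Unset Printing Implicit Defensive.

Definition pt := 'I_4 -> R.

Definition ix1 : 'I_4 := @Ordinal 4 0 isT.
Definition ix2 : 'I_4 := @Ordinal 4 1 isT.
Definition iy1 : 'I_4 := @Ordinal 4 2 isT.
Definition iy2 : 'I_4 := @Ordinal 4 3 isT.

Definition Xc (z : pt) : R := Rminus (z ix1) (z iy1).
Definition Yc (z : pt) : R := Rminus (z ix2) (z iy2).

Definition inV (z : pt) : Prop := Xc z <> R0 /\ Yc z <> R0.

Definition peval (p : {mpoly rat[4]}) (z : pt) : R :=
  (map_mpoly (ratr : rat -> R) p).@[z].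

Definition H (P1 P2 P3 P4 : {mpoly rat[4]}) (z : pt) : R :=
  Rplus (Rplus (Rplus
    (Rmult (peval P1 z) (ln (Rplus (Rsqr (Xc z)) (Rsqr (Yc z)))))
    (Rmult (peval P2 z) (atan (Rdiv (Xc z) (Yc z)))))
    (Rmult (peval P3 z) (atan (Rdiv (Yc z) (Xc z)))))
    (peval P4 z).

Definition upd (z : pt) (i : 'I_4) (t : R) : pt :=
  fun j => if j == i then t else z j.

Definition has_partial (f : pt -> R) (i : 'I_4) (z : pt) (l : R) : Prop :=
  derivable_pt_lim (fun t => f (upd z i t)) (z i) l.

(* Main.v *)
Require Import Defs.
From mathcomp Require Import all_boot all_order all_algebra.
From mathcomp Require Import mpoly.
From mathcomp Require Import Rstruct.
From Stdlib Require Import Reals Lra Lia Field FunctionalExtensionality.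
From Coquelicot Require Coquelicot.
Import GRing.Theory Num.Theory.

Section PE.
Local Open Scope ring_scope.

Lemma peval_add p q w : peval (p + q) w = Rplus (peval p w) (peval q w).
Proof. by rewrite /peval rmorphD mevalD. Qed.
Lemma peval_mul p q w : peval (p * q) w = Rmult (peval p w) (peval q w).
Proof. by rewrite /peval rmorphM mevalM. Qed.
Lemma peval_X i w : peval 'X_i w = w i.
Proof. by rewrite /peval map_mpolyX mevalXU. Qed.
Lemma peval_C c w : peval c%:MP w = ratr c.
Proof. by rewrite /peval map_mpolyC mevalC. Qed.
Lemma peval_Z c p w : peval (c *: p) w = Rmult (ratr c) (peval p w).
Proof. by rewrite /peval map_mpolyZ mevalZ. Qed.
Lemma peval_opp p w : peval (- p) w = Ropp (peval p w).
Proof. by rewrite /peval rmorphN mevalN. Qed.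
Lemma peval_sub p q w : peval (p - q) w = Rminus (peval p w) (peval q w).
Proof. by rewrite /peval rmorphB mevalB. Qed.
Lemma peval_0 w : peval 0 w = R0.
Proof. by rewrite /peval rmorph0 meval0. Qed.
Lemma peval_1 w : peval 1 w = R1.
Proof. by rewrite /peval rmorph1 meval1. Qed.
Lemma peval_exp p n w : peval (p ^+ n) w = pow (peval p w) n.
Proof. by rewrite /peval !rmorphXn RpowE. Qed.
Lemma peval_mono m w : peval 'X_[m] w = \prod_(i < 4) (w i) ^+ (m i).
Proof. by rewrite /peval map_mpolyX mevalX. Qed.
Lemma ratrN1 : ratr (-1 : rat) = (-1)%R :> R.
Proof. by rewrite rmorphN rmorph1. Qed.
Lemma ratr_inv_nat n : ratr ((n.+1)%:R^-1 : rat) = Rinv (INR n.+1).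
Proof. by rewrite fmorphV rmorph_nat INRE. Qed.

End PE.

Open Scope R_scope.
Module An.
Import Coquelicot.Coquelicot.
Lemma pos_uv u v : v <> 0 -> 0 < u^2 + v^2.
Proof. intros hv. generalize (Rsqr_pos_lt v hv) (pow2_ge_0 u). unfold Rsqr. intros; nra. Qed.
Ltac fin t0 c := replace (t0 + - c) with (t0 - c) by ring;
  let u := fresh in set (u := t0 - c) in *; unfold Rdiv.
Lemma D_pow c n t0 : derivable_pt_lim (fun t => (t-c)^n) t0 (INR n * (t0-c)^Nat.pred n).
Proof. apply is_derive_Reals. auto_derive; auto. unfold Rminus; ring. Qed.
Lemma D_L c v n t0 : v <> 0 ->
  derivable_pt_lim (fun t => (t-c)^n * ln ((t-c)^2+v^2)) t0
   (INR n * (t0-c)^Nat.pred n * ln ((t0-c)^2+v^2) + (t0-c)^n * (2*(t0-c)/((t0-c)^2+v^2))).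
Proof.
intros hv. assert (0 < (t0-c)^2+v^2) by (apply pos_uv; auto).
apply is_derive_Reals. auto_derive.
- repeat split; auto. replace ((t0 + - c) * ((t0 + - c) * 1) + v * (v * 1)) with ((t0-c)^2+v^2) by ring; auto.
- replace ((t0 + - c) * ((t0 + - c) * 1) + v * (v * 1)) with ((t0-c)^2+v^2) by ring.
  fin t0 c. field. lra.
Qed.
Lemma D_A c v n t0 : v <> 0 ->
  derivable_pt_lim (fun t => (t-c)^n * atan ((t-c)/v)) t0
   (INR n * (t0-c)^Nat.pred n * atan ((t0-c)/v) + (t0-c)^n * (v/((t0-c)^2+v^2))).
Proof.
intros hv. assert (0 < (t0-c)^2+v^2) by (apply pos_uv; auto).
apply is_derive_Reals. auto_derive; auto.
fin t0 c. replace (1 + H0 * / v * (H0 * / v * 1)) with ((H0^2+v^2)/ v^2) by (field; auto).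
field. split; auto. lra.
Qed.
Lemma D_B c v n t0 : v <> 0 -> t0 - c <> 0 ->
  derivable_pt_lim (fun t => (t-c)^n * atan (v/(t-c))) t0
   (INR n * (t0-c)^Nat.pred n * atan (v/(t0-c)) - (t0-c)^n * (v/((t0-c)^2+v^2))).
Proof.
intros hv hu. assert (0 < (t0-c)^2+v^2) by (apply pos_uv; auto).
apply is_derive_Reals. auto_derive.
- replace (t0 + - c) with (t0 - c) by ring. auto.
- fin t0 c. replace (1 + v * / H0 * (v * / H0 * 1)) with ((H0^2+v^2)/ H0^2) by (field; auto).
  field. repeat split; auto; lra.
Qed.
End An.


Definition Int (xi : 'I_4) (g : pt -> R) := exists Q1 Q2 Q3 Q4 : {mpoly rat[4]},
  forall z, inV z -> has_partial (H Q1 Q2 Q3 Q4) xi z (g z).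

Lemma dpl_ext f g x l : (forall t, f t = g t) -> derivable_pt_lim f x l -> derivable_pt_lim g x l.
Proof. by move=> e; have -> : g = f by apply: functional_extensionality => t; rewrite e. Qed.

Lemma Int_ext xi g g' : Int xi g -> (forall z, inV z -> g z = g' z) -> Int xi g'.
Proof.
move=> [Q1 [Q2 [Q3 [Q4 h]]]] e; exists Q1, Q2, Q3, Q4 => z hz.
by rewrite -e //; apply: h.
Qed.

Lemma H_add (P1 P2 P3 P4 Q1 Q2 Q3 Q4 : {mpoly rat[4]}) w :
  H (GRing.add P1 Q1) (GRing.add P2 Q2) (GRing.add P3 Q3) (GRing.add P4 Q4) w = H P1 P2 P3 P4 w + H Q1 Q2 Q3 Q4 w.
Proof. rewrite /H !peval_add; ring. Qed.

Lemma H_scal c (P1 P2 P3 P4 : {mpoly rat[4]}) w :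
  H (GRing.scale c P1) (GRing.scale c P2) (GRing.scale c P3) (GRing.scale c P4) w = ratr c * H P1 P2 P3 P4 w.
Proof. rewrite /H !peval_Z; ring. Qed.

Lemma H_mulX j (P1 P2 P3 P4 : {mpoly rat[4]}) w :
  H (GRing.mul 'X_j P1) (GRing.mul 'X_j P2) (GRing.mul 'X_j P3) (GRing.mul 'X_j P4) w = w j * H P1 P2 P3 P4 w.
Proof. rewrite /H !peval_mul !peval_X; ring. Qed.

Lemma Int_add xi g1 g2 : Int xi g1 -> Int xi g2 -> Int xi (fun z => g1 z + g2 z).
Proof.
move=> [Q1 [Q2 [Q3 [Q4 h]]]] [P1 [P2 [P3 [P4 h']]]].
exists (GRing.add Q1 P1), (GRing.add Q2 P2), (GRing.add Q3 P3), (GRing.add Q4 P4) => z hz.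
rewrite /has_partial; apply: dpl_ext; first by move=> t; rewrite H_add.
exact: (derivable_pt_lim_plus _ _ _ _ _ (h z hz) (h' z hz)).
Qed.

Lemma Int_scal xi c g : Int xi g -> Int xi (fun z => ratr c * g z).
Proof.
move=> [Q1 [Q2 [Q3 [Q4 h]]]].
exists (GRing.scale c Q1), (GRing.scale c Q2), (GRing.scale c Q3), (GRing.scale c Q4) => z hz.
rewrite /has_partial; apply: dpl_ext; first by move=> t; rewrite H_scal.
exact: (derivable_pt_lim_scal _ _ _ _ (h z hz)).
Qed.

Lemma Int_mulX xi j g : j != xi -> Int xi g -> Int xi (fun z => z j * g z).
Proof.
move=> hj [Q1 [Q2 [Q3 [Q4 h]]]].
exists (GRing.mul 'X_j Q1), (GRing.mul 'X_j Q2), (GRing.mul 'X_j Q3), (GRing.mul 'X_j Q4) => z hz.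
rewrite /has_partial; apply: dpl_ext.
  by move=> t; rewrite H_mulX /upd (negbTE hj).
exact: (derivable_pt_lim_scal _ _ _ _ (h z hz)).
Qed.

Lemma Int_zero xi : Int xi (fun _ => 0).
Proof.
exists (GRing.zero : {mpoly rat[4]}), (GRing.zero : {mpoly rat[4]}), (GRing.zero : {mpoly rat[4]}), (GRing.zero : {mpoly rat[4]}) => z hz.
rewrite /has_partial; apply: (@dpl_ext (fun _ => 0)); last exact: (derivable_pt_lim_const 0 (z xi)).
by move=> t; rewrite /H !peval_0 /=; ring.
Qed.

Arguments Int_ext {xi g g'}.
Arguments Int_scal {xi} c {g}.
Arguments Int_add {xi g1 g2}.
Arguments Int_mulX {xi j g}.

Lemma I4cases (xi : 'I_4) : xi = ix1 \/ xi = ix2 \/ xi = iy1 \/ xi = iy2.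
Proof.
case: xi => [[|[|[|[|m]]]] hm].
- by left; apply: val_inj.
- by right; left; apply: val_inj.
- by right; right; left; apply: val_inj.
- by right; right; right; apply: val_inj.
- by [].
Qed.

Definition partner (xi : 'I_4) : 'I_4 :=
  if xi == ix1 then iy1 else if xi == ix2 then iy2 else if xi == iy1 then ix1 else ix2.
Definition isX (xi : 'I_4) := (xi == ix1) || (xi == iy1).
Definition uf (xi : 'I_4) (w : pt) : R := w xi - w (partner xi).
Definition vf (xi : 'I_4) (w : pt) : R := if isX xi then Yc w else Xc w.

Lemma partner_neq xi : partner xi != xi.
Proof. by case: (I4cases xi) => [->|[->|[->|->]]]. Qed.

Lemma upd_self z xi t : upd z xi t xi = t.
Proof. by rewrite /upd eqxx. Qed.
Lemma upd_other z xi t j : j != xi -> upd z xi t j = z j.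
Proof. by move=> h; rewrite /upd (negbTE h). Qed.

Lemma uf_upd z xi t : uf xi (upd z xi t) = t - z (partner xi).
Proof. by rewrite /uf upd_self upd_other // partner_neq. Qed.

Lemma vf_upd z xi t : vf xi (upd z xi t) = vf xi z.
Proof. by case: (I4cases xi) => [->|[->|[->|->]]]. Qed.

Lemma uv_nz z xi : inV z -> uf xi z <> 0 /\ vf xi z <> 0.
Proof.
rewrite /inV /uf /vf /Xc /Yc.
case: (I4cases xi) => [->|[->|[->|->]]] /= [h1 h2]; split => //; rewrite /partner /= => h; [apply: h1|apply: h2]; lra.
Qed.
Lemma sq_uv xi w : Rsqr (Xc w) + Rsqr (Yc w) = uf xi w ^ 2 + vf xi w ^ 2.
Proof.
rewrite /uf /vf /Xc /Yc /Rsqr.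
case: (I4cases xi) => [->|[->|[->|->]]]; rewrite /partner /=; ring.
Qed.


Definition Zm : {mpoly rat[4]} := GRing.zero.

Lemma atan_div_opp a b : atan (- a / b) = - atan (a / b).
Proof. rewrite -atan_opp; f_equal; unfold Rdiv; ring. Qed.
Lemma atan_div_opp' a b : atan (a / - b) = - atan (a / b).
Proof. rewrite -atan_opp; f_equal; unfold Rdiv; rewrite Rinv_opp; ring. Qed.

Lemma ShA xi (p : {mpoly rat[4]}) : exists Q1 Q2 Q3 Q4 : {mpoly rat[4]},
  forall w, H Q1 Q2 Q3 Q4 w = peval p w * atan (uf xi w / vf xi w).
Proof.
rewrite /uf /vf /H /Xc /Yc.
case: (I4cases xi) => [->|[->|[->|->]]]; rewrite /partner /isX /=.
- exists Zm, p, Zm, Zm => w; rewrite !peval_0; ring.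
- exists Zm, Zm, p, Zm => w; rewrite !peval_0; ring.
- exists Zm, (GRing.opp p), Zm, Zm => w; rewrite !peval_0 peval_opp.
  replace (w iy1 - w ix1) with (- (w ix1 - w iy1)) by ring; rewrite atan_div_opp; ring.
- exists Zm, Zm, (GRing.opp p), Zm => w; rewrite !peval_0 peval_opp.
  replace (w iy2 - w ix2) with (- (w ix2 - w iy2)) by ring; rewrite atan_div_opp; ring.
Qed.

Lemma ShB xi (p : {mpoly rat[4]}) : exists Q1 Q2 Q3 Q4 : {mpoly rat[4]},
  forall w, H Q1 Q2 Q3 Q4 w = peval p w * atan (vf xi w / uf xi w).
Proof.
rewrite /uf /vf /H /Xc /Yc.
case: (I4cases xi) => [->|[->|[->|->]]]; rewrite /partner /isX /=.
- exists Zm, Zm, p, Zm => w; rewrite !peval_0; ring.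
- exists Zm, p, Zm, Zm => w; rewrite !peval_0; ring.
- exists Zm, Zm, (GRing.opp p), Zm => w; rewrite !peval_0 peval_opp.
  replace (w iy1 - w ix1) with (- (w ix1 - w iy1)) by ring; rewrite atan_div_opp'; ring.
- exists Zm, (GRing.opp p), Zm, Zm => w; rewrite !peval_0 peval_opp.
  replace (w iy2 - w ix2) with (- (w ix2 - w iy2)) by ring; rewrite atan_div_opp'; ring.
Qed.

Lemma ShL xi (p : {mpoly rat[4]}) w : H p Zm Zm Zm w = peval p w * ln (uf xi w ^ 2 + vf xi w ^ 2).
Proof. rewrite /H !peval_0 -sq_uv; ring. Qed.

Lemma ShC (p : {mpoly rat[4]}) w : H Zm Zm Zm p w = peval p w.
Proof. rewrite /H !peval_0; ring. Qed.

Definition Up xi : {mpoly rat[4]} := GRing.add 'X_xi (GRing.opp 'X_(partner xi)).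

Lemma peval_Up xi n z t : peval (GRing.exp (Up xi) n) (upd z xi t) = (t - z (partner xi)) ^ n.
Proof. by rewrite peval_exp peval_add peval_opp !peval_X upd_self upd_other // partner_neq. Qed.


Lemma GenA xi n : Int xi (fun z => INR n * uf xi z ^ Nat.pred n * atan (uf xi z / vf xi z)
   + uf xi z ^ n * (vf xi z / (uf xi z ^ 2 + vf xi z ^ 2))).
Proof.
have [Q1 [Q2 [Q3 [Q4 hQ]]]] := ShA xi (GRing.exp (Up xi) n).
exists Q1, Q2, Q3, Q4 => z hz; have [hu hv] := uv_nz z xi hz.
rewrite /has_partial.
apply: (@dpl_ext (fun t => (t - z (partner xi)) ^ n * atan ((t - z (partner xi)) / vf xi z))).
  by move=> t; rewrite hQ peval_Up uf_upd vf_upd.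
exact: An.D_A.
Qed.

Lemma GenB xi n : Int xi (fun z => INR n * uf xi z ^ Nat.pred n * atan (vf xi z / uf xi z)
   - uf xi z ^ n * (vf xi z / (uf xi z ^ 2 + vf xi z ^ 2))).
Proof.
have [Q1 [Q2 [Q3 [Q4 hQ]]]] := ShB xi (GRing.exp (Up xi) n).
exists Q1, Q2, Q3, Q4 => z hz; have [hu hv] := uv_nz z xi hz.
rewrite /has_partial.
apply: (@dpl_ext (fun t => (t - z (partner xi)) ^ n * atan (vf xi z / (t - z (partner xi))))).
  by move=> t; rewrite hQ peval_Up uf_upd vf_upd.
exact: An.D_B.
Qed.

Lemma GenL xi n : Int xi (fun z => INR n * uf xi z ^ Nat.pred n * ln (uf xi z ^ 2 + vf xi z ^ 2)
   + uf xi z ^ n * (2 * uf xi z / (uf xi z ^ 2 + vf xi z ^ 2))).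
Proof.
exists (GRing.exp (Up xi) n), Zm, Zm, Zm => z hz; have [hu hv] := uv_nz z xi hz.
rewrite /has_partial.
apply: (@dpl_ext (fun t => (t - z (partner xi)) ^ n * ln ((t - z (partner xi)) ^ 2 + vf xi z ^ 2))).
  by move=> t; rewrite (ShL xi) peval_Up uf_upd vf_upd.
exact: An.D_L.
Qed.

Lemma GenC xi n : Int xi (fun z => INR n * uf xi z ^ Nat.pred n).
Proof.
exists Zm, Zm, Zm, (GRing.exp (Up xi) n) => z hz.
rewrite /has_partial.
apply: (@dpl_ext (fun t => (t - z (partner xi)) ^ n)).
  by move=> t; rewrite ShC peval_Up.
exact: An.D_pow.
Qed.


Lemma Int_nat {xi} n {g} : Int xi g -> Int xi (fun z => INR n * g z).
Proof.
move=> h; apply: Int_ext (Int_scal (GRing.natmul (GRing.one rat) n) h) _ => z _.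
by rewrite rmorph_nat INRE.
Qed.
Lemma Int_invn {xi} n {g} : Int xi g -> Int xi (fun z => / INR (S n) * g z).
Proof.
move=> h; apply: Int_ext (Int_scal (GRing.inv (GRing.natmul (GRing.one rat) n.+1)) h) _ => z _.
by rewrite ratr_inv_nat.
Qed.
Lemma Int_opp {xi g} : Int xi g -> Int xi (fun z => - g z).
Proof.
move=> h; apply: Int_ext (Int_scal (GRing.opp (GRing.one rat)) h) _ => z _.
rewrite ratrN1; ring.
Qed.
Lemma Int_sub {xi g1 g2} : Int xi g1 -> Int xi g2 -> Int xi (fun z => g1 z - g2 z).
Proof. move=> h1 h2; exact: Int_add h1 (Int_opp h2). Qed.

Lemma vf_split xi : exists a b : 'I_4, a != xi /\ b != xi /\ forall z, vf xi z = z a - z b.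
Proof.
rewrite /vf /Xc /Yc /isX.
case: (I4cases xi) => [->|[->|[->|->]]] /=.
- by exists ix2, iy2.
- by exists ix1, iy1.
- by exists ix2, iy2.
- by exists ix1, iy1.
Qed.

Lemma Int_mulV {xi g} : Int xi g -> Int xi (fun z => vf xi z * g z).
Proof.
move=> h; have [a [b [ha [hb e]]]] := vf_split xi.
apply: Int_ext (Int_sub (Int_mulX ha h) (Int_mulX hb h)) _ => z _.
rewrite e; ring.
Qed.

Lemma D_nz xi z : inV z -> uf xi z ^ 2 + vf xi z ^ 2 <> 0.
Proof. move=> hz; have [_ hv] := uv_nz z xi hz; have := An.pos_uv (uf xi z) (vf xi z) hv; lra. Qed.

Definition Rn xi n z := uf xi z ^ n / (uf xi z ^ 2 + vf xi z ^ 2).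

Lemma Seq xi n : Int xi (fun z => vf xi z * Rn xi n z) /\ Int xi (Rn xi (S n)).
Proof.
elim: n => [|n [IH1 IH2]].
- split.
  + apply: Int_ext (GenA xi 0) _ => z hz; rewrite /Rn /=; field; move=> E; apply: (D_nz xi z hz); rewrite -E; ring.
  + apply: Int_ext (Int_invn 1 (GenL xi 0)) _ => z hz; rewrite /Rn /=; field; move=> E; apply: (D_nz xi z hz); rewrite -E; ring.
- split.
  + exact: Int_mulV IH2.
  + apply: Int_ext (Int_sub (Int_invn n (GenC xi (S n))) (Int_mulV IH1)) _ => z hz.
    have hD := D_nz xi z hz.
    rewrite /Rn; cbv beta; rewrite [Nat.pred _]/=.
    change (uf xi z ^ n.+2) with (uf xi z ^ (2 + n)); rewrite pow_add.
    have hn := not_0_INR (S n) (Nat.neq_succ_0 n).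
    field; split => //.
Qed.

Ltac prep xi z hz k :=
  rewrite /Rn; cbv beta; rewrite [Nat.pred _]/=;
  have hD := D_nz xi z hz;
  have hn := not_0_INR (S k) (Nat.neq_succ_0 k).

Lemma IntL xi k : Int xi (fun z => uf xi z ^ k * ln (uf xi z ^ 2 + vf xi z ^ 2)).
Proof.
apply: Int_ext (Int_invn k (Int_sub (GenL xi (S k)) (Int_nat 2 (Seq xi (S k)).2))) _ => z hz.
prep xi z hz k.
change (uf xi z ^ k.+2) with (uf xi z ^ (2 + k)); rewrite pow_add.
change (uf xi z ^ k.+1) with (uf xi z ^ (1 + k)); rewrite pow_add.
rewrite [INR 2]/=.
field; split => //.
Qed.

Lemma IntA xi k : Int xi (fun z => uf xi z ^ k * atan (uf xi z / vf xi z)).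
Proof.
apply: Int_ext (Int_invn k (Int_sub (GenA xi (S k)) (Seq xi (S k)).1)) _ => z hz.
prep xi z hz k.
change (uf xi z ^ k.+1) with (uf xi z ^ (1 + k)); rewrite pow_add.
field; split => //.
Qed.

Lemma IntB xi k : Int xi (fun z => uf xi z ^ k * atan (vf xi z / uf xi z)).
Proof.
apply: Int_ext (Int_invn k (Int_add (GenB xi (S k)) (Seq xi (S k)).1)) _ => z hz.
prep xi z hz k.
change (uf xi z ^ k.+1) with (uf xi z ^ (1 + k)); rewrite pow_add.
field; split => //.
Qed.

Lemma IntC xi k : Int xi (fun z => uf xi z ^ k).
Proof.
apply: Int_ext (Int_invn k (GenC xi (S k))) _ => z hz.
prep xi z hz k.
by field.
Qed.


Definition Good xi (F : pt -> R) := forall k, Int xi (fun z => uf xi z ^ k * F z).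

Lemma Good_ext xi F G : Good xi F -> (forall w, F w = G w) -> Good xi G.
Proof. by move=> h e k; apply: Int_ext (h k) _ => z _; rewrite e. Qed.
Lemma Good_opp xi F : Good xi F -> Good xi (fun w => - F w).
Proof. by move=> h k; apply: Int_ext (Int_opp (h k)) _ => z _; ring. Qed.

Lemma step1 xi F : Good xi F -> forall a k, Int xi (fun z => z xi ^ a * (uf xi z ^ k * F z)).
Proof.
move=> h; elim=> [|a IH] k.
  by apply: Int_ext (h k) _ => z _; ring.
apply: Int_ext (Int_add (IH k.+1) (Int_mulX (partner_neq xi) (IH k))) _ => z _.
rewrite /uf /=; ring.
Qed.

Lemma step2 xi j g : j != xi -> Int xi g -> forall n, Int xi (fun z => z j ^ n * g z).
Proof.
move=> hj h; elim=> [|n IH].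
  by apply: Int_ext h _ => z _; ring.
apply: Int_ext (Int_mulX hj IH) _ => z _; rewrite /=; ring.
Qed.

Arguments step1 {xi F}.
Arguments step2 {xi} j {g}.

Lemma prod4 (f : 'I_4 -> R) : \big[@GRing.mul R/GRing.one R]_(i < 4) f i = f ix1 * f ix2 * f iy1 * f iy2.
Proof.
rewrite !big_ord_recl big_ord0.
have H : forall i j : 'I_4, val i = val j -> f i = f j by move=> i j /val_inj ->.
rewrite (H (lift _ _) ix2) // (H (lift _ _) iy1) // (H (lift _ _) iy2) // (H ord0 ix1) //.
by rewrite mulr1 !mulrA.
Qed.

Lemma mono xi F : Good xi F -> forall a0 a1 a2 a3,
  Int xi (fun z => z ix1 ^ a0 * z ix2 ^ a1 * z iy1 ^ a2 * z iy2 ^ a3 * F z).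
Proof.
move=> h a0 a1 a2 a3.
case: (I4cases xi) h => [->|[->|[->|->]]] h.
- apply: Int_ext (step2 (xi:=ix1) iy2 isT (step2 (xi:=ix1) iy1 isT (step2 (xi:=ix1) ix2 isT (step1 h a0 0) a1) a2) a3) _.
  by move=> z _; rewrite /=; ring.
- apply: Int_ext (step2 (xi:=ix2) iy2 isT (step2 (xi:=ix2) iy1 isT (step2 (xi:=ix2) ix1 isT (step1 h a1 0) a0) a2) a3) _.
  by move=> z _; rewrite /=; ring.
- apply: Int_ext (step2 (xi:=iy1) iy2 isT (step2 (xi:=iy1) ix1 isT (step2 (xi:=iy1) ix2 isT (step1 h a2 0) a1) a0) a3) _.
  by move=> z _; rewrite /=; ring.
- apply: Int_ext (step2 (xi:=iy2) iy1 isT (step2 (xi:=iy2) ix1 isT (step2 (xi:=iy2) ix2 isT (step1 h a3 0) a1) a0) a2) _.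
  by move=> z _; rewrite /=; ring.
Qed.

Lemma AllP xi F : Good xi F -> forall p, Int xi (fun z => peval p z * F z).
Proof.
move=> h; apply: mpolyind.
  by apply: Int_ext (Int_zero xi) _ => z _; rewrite peval_0; ring.
move=> c m p _ _ IH.
apply: Int_ext (Int_add (Int_scal c (@mono xi F h (m ix1) (m ix2) (m iy1) (m iy2))) IH) _ => z _.
rewrite peval_add peval_Z peval_mono prod4 -!RpowE; ring.
Qed.

Arguments Good_ext {xi F G}.
Arguments Good_opp {xi F}.
Arguments AllP {xi F}.

Lemma GoodL xi : Good xi (fun w => ln (Rsqr (Xc w) + Rsqr (Yc w))).
Proof. apply: Good_ext (IntL xi) _ => w; by rewrite (sq_uv xi). Qed.
Lemma GoodC xi : Good xi (fun _ => 1).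
Proof. move=> k; apply: Int_ext (IntC xi k) _ => z _; ring. Qed.

Lemma GoodXY xi : Good xi (fun w => atan (Xc w / Yc w)).
Proof.
case: (I4cases xi) => [->|[->|[->|->]]].
- by apply: Good_ext (IntA ix1) _ => w; rewrite /uf /vf /partner /=.
- by apply: Good_ext (IntB ix2) _ => w; rewrite /uf /vf /partner /=.
- apply: Good_ext (Good_opp (IntA iy1)) _ => w; rewrite /uf /vf /partner /Xc /=.
  replace (w iy1 - w ix1) with (- (w ix1 - w iy1)) by ring; rewrite atan_div_opp; ring.
- apply: Good_ext (Good_opp (IntB iy2)) _ => w; rewrite /uf /vf /partner /Yc /=.
  replace (w iy2 - w ix2) with (- (w ix2 - w iy2)) by ring; rewrite atan_div_opp'; ring.
Qed.

Lemma GoodYX xi : Good xi (fun w => atan (Yc w / Xc w)).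
Proof.
case: (I4cases xi) => [->|[->|[->|->]]].
- by apply: Good_ext (IntB ix1) _ => w; rewrite /uf /vf /partner /=.
- by apply: Good_ext (IntA ix2) _ => w; rewrite /uf /vf /partner /=.
- apply: Good_ext (Good_opp (IntB iy1)) _ => w; rewrite /uf /vf /partner /Xc /=.
  replace (w iy1 - w ix1) with (- (w ix1 - w iy1)) by ring; rewrite atan_div_opp'; ring.
- apply: Good_ext (Good_opp (IntA iy2)) _ => w; rewrite /uf /vf /partner /Yc /=.
  replace (w iy2 - w ix2) with (- (w ix2 - w iy2)) by ring; rewrite atan_div_opp; ring.
Qed.

Theorem mainTheorem7 :
  forall (P1 P2 P3 P4 : {mpoly rat[4]}) (xi : 'I_4),
  exists Q1 Q2 Q3 Q4 : {mpoly rat[4]},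
    forall z : pt, inV z ->
      has_partial (H Q1 Q2 Q3 Q4) xi z (H P1 P2 P3 P4 z).
Proof.
move=> P1 P2 P3 P4 xi.
have h := Int_add (Int_add (Int_add (AllP (GoodL xi) P1) (AllP (GoodXY xi) P2))
            (AllP (GoodYX xi) P3)) (AllP (GoodC xi) P4).
apply: (Int_ext h) => z _; rewrite /H; ring.
Qed.
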